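(* Assume $192S\le T$. On the event $E$, for every arm $i$ and every integer $n\le 192S$, $n\,\widehat\mu_{i,n}<210c^2\log T$.
   Context: Bandit setup: $k$ arms, arm $i$ a distribution on $[0,1]$ with mean $\mu_i$, $\mu^*:=\max_i\mu_i>0$. $\log$ is the natural logarithm; $c:=3$; $T$ is the overall horizon and $S:=\frac{c^2\log T}{\mu^*}$. Canonical model: a $k\times T$ table $(Y_{i,s})$ of independent entries with $Y_{i,s}$ distributed as arm $i$, the $s$-th pull of arm $i$ yielding $Y_{i,s}$; $\widehat\mu_{i,s}:=\frac1s\sum_{r=1}^sY_{i,r}$ (and $n\widehat\mu_{i,n}:=0$ for $n=0$). Uniform sampling is modeled by independent uniform $U_1,\dots,U_T\in[k]$ (independent of the table). Events: $E_1$: for every integer $r$ with $128kS\le r\le T$ and every arm $i$, the number of $r'\le r$ with $U_{r'}=i$ is at least $\frac{r}{2k}$ and at most $\frac{3r}{2k}$. $E_2$: for every arm $i$ with $\mu_i>\frac{\mu^*}{64}$ and every integer $s$ with $64S\le s\le T$, $|\mu_i-\widehat\mu_{i,s}|\le c\sqrt{\frac{\mu_i\log T}{s}}$. $E_3$: for every arm $j$ with $\mu_j\le\frac{\mu^*}{64}$ and every integer $s$ with $64S\le s\le T$, $\widehat\mu_{j,s}<\frac{\mu^*}{32}$. $E:=E_1\cap E_2\cap E_3$. *)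

(* Defs.v *)
From mathcomp Require Import all_boot all_order all_algebra.
From mathcomp Require Import reals exp.
Set Implicit Arguments. Unset Strict Implicit. Unset Printing Implicit Defensive.
Import Order.TTheory GRing.Theory Num.Theory.
Local Open Scope ring_scope.

Definition cst {R : realType} : R := 3.

(* mu^* := max_i mu_i  (arm means are nonnegative, so 0 is a harmless seed) *)
Definition mustar {R : realType} {k : nat} (mu : 'I_k -> R) : R :=
  \big[Num.max/0]_(i < k) mu i.

Definition Sval {R : realType} {k : nat} (mu : 'I_k -> R) (T : nat) : R :=
  cst ^+ 2 * ln (T%:R) / mustar mu.

(* empirical mean of the first s pulls of arm i: (1/s) sum_{r=1}^s Y_{i,r};
   for s = 0 this is 0/0 = 0 in MathComp, so s * muhat = 0. *)
Definition muhat {R : realType} {k : nat} (Y : 'I_k -> nat -> R) (i : 'I_k) (s : nat) : R :=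
  (\sum_(1 <= r < s.+1) Y i r) / s%:R.

Definition ucount {k : nat} (U : nat -> 'I_k) (i : 'I_k) (r : nat) : nat :=
  (\sum_(1 <= r' < r.+1) (U r' == i : nat))%N.

Definition event_E1 {R : realType} {k : nat} (mu : 'I_k -> R) (T : nat) (U : nat -> 'I_k) : Prop :=
  forall r : nat, 128 * k%:R * Sval mu T <= r%:R -> (r <= T)%N ->
  forall i : 'I_k,
    r%:R / (2 * k%:R) <= (ucount U i r)%:R :> R /\
    (ucount U i r)%:R <= 3 * r%:R / (2 * k%:R) :> R.

Definition event_E2 {R : realType} {k : nat} (mu : 'I_k -> R) (T : nat) (Y : 'I_k -> nat -> R) : Prop :=
  forall i : 'I_k, mustar mu / 64 < mu i ->
  forall s : nat, 64 * Sval mu T <= s%:R -> (s <= T)%N ->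
    `|mu i - muhat Y i s| <= cst * Num.sqrt (mu i * ln (T%:R) / s%:R).

Definition event_E3 {R : realType} {k : nat} (mu : 'I_k -> R) (T : nat) (Y : 'I_k -> nat -> R) : Prop :=
  forall j : 'I_k, mu j <= mustar mu / 64 ->
  forall s : nat, 64 * Sval mu T <= s%:R -> (s <= T)%N ->
    muhat Y j s < mustar mu / 32.

Definition event_E {R : realType} {k : nat} (mu : 'I_k -> R) (T : nat)
  (Y : 'I_k -> nat -> R) (U : nat -> 'I_k) : Prop :=
  event_E1 mu T U /\ event_E2 mu T Y /\ event_E3 mu T Y.

(* Main.v *)
Require Import Defs.
From mathcomp Require Import all_boot all_order all_algebra.
From mathcomp Require Import reals exp.
From mathcomp Require Import ring lra.
Import Order.TTheory GRing.Theory Num.Theory.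
Local Open Scope ring_scope.

Lemma sum_muhat (R : realType) (k : nat) (Y : 'I_k -> nat -> R) i j :
  j%:R * muhat Y i j = \sum_(1 <= r < j.+1) Y i r.
Proof.
rewrite /muhat; case: j => [|j].
  by rewrite mul0r big_geq.
by rewrite mulrC divfK // pnatr_eq0.
Qed.

Theorem lemma6 (R : realType) (k T : nat) (mu : 'I_k -> R)
  (Y : 'I_k -> nat -> R) (U : nat -> 'I_k) :
  (2 <= T)%N ->
  (forall i : 'I_k, 0 <= mu i <= 1) ->
  0 < mustar mu ->
  (forall (i : 'I_k) (s : nat), (1 <= s <= T)%N -> 0 <= Y i s <= 1) ->
  192 * Sval mu T <= T%:R ->
  event_E mu T Y U ->
  forall (i : 'I_k) (n : nat), n%:R <= 192 * Sval mu T ->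
    n%:R * muhat Y i n < 210 * cst ^+ 2 * ln (T%:R).
Proof.
move=> T2 hmu Mpos hY hST [_ [E2 E3]] i n hn.
set L := ln T%:R.
have T2R : 2 <= T%:R :> R by rewrite (ler_nat R 2).
have TposR : 0 < T%:R :> R by lra.
have L12 : 1/2 <= L.
  have h := expR_ge1Dx (- L).
  rewrite expRN /L lnK ?posrE // in h.
  have : T%:R^-1 <= 2^-1 :> R by rewrite lef_pV2 ?posrE //; lra.
  rewrite /L; lra.
set M := mustar mu.
have M1 : M <= 1.
  by apply: bigmax_le => // j _; case/andP: (hmu j).
have muM j : mu j <= M by apply: le_bigmax.
have SM : Sval mu T * M = 9 * L.
  by rewrite /Sval /cst -/M -/L divfK ?gt_eqF //; lra.
set S := Sval mu T in hST hn SM *.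
have Lp : 0 < L by lra.
have Sp : 0 < S by rewrite /S /Sval -/L divr_gt0 // mulr_gt0 // /cst; lra.
have LE : L = ln T%:R by [].
have ME : M = mustar mu by [].
have SE : S = Sval mu T by [].
clearbody L M S.
have S92 : 9/2 <= S.
  have : 9 * L <= S by rewrite -SM ler_piMr //; lra.
  lra.
have S0 : 0 <= S by lra.
have [m [hm1 hm2]] : exists m : nat, 64 * S <= m%:R /\ m%:R <= 64 * S + 1.
  exists (Num.truncn (64 * S)).+1.
  have h64 : 0 <= 64 * S by lra.
  have /andP[h1 h2] := truncn_itv h64.
  split; first by lra.
  by move: h1; rewrite -natr1; lra.
set s := maxn n m.
have sn : (n <= s)%N by apply: leq_maxl.
have [s64 s192] : 64 * S <= s%:R /\ s%:R <= 192 * S.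
  rewrite /s; case: (leqP n m) => h.
    lra.

  have : m%:R <= n%:R :> R by rewrite ler_nat ltnW.
  lra.
have sT : (s <= T)%N by rewrite -(ler_nat R); lra.
have spos : 0 < s%:R :> R by lra.
have key : n%:R * muhat Y i n <= s%:R * muhat Y i s.
  rewrite !sum_muhat [X in _ <= X](@big_cat_nat _ _ _ n.+1) //= ?ltnS //.
  rewrite lerDl big_nat_cond; apply: sumr_ge0 => r /andP[/andP[h1 h2] _].
  have hr : (1 <= r <= T)%N.
    by apply/andP; split; [apply: leq_trans h1 | apply: leq_trans sT; rewrite -ltnS].
  by case/andP: (hY i r hr).
apply: (le_lt_trans key); rewrite /cst.
case: (ltrP (M / 64) (mu i)) => hmi.
  have hmi' : mustar mu / 64 < mu i by rewrite -ME.
  have s64' : 64 * Sval mu T <= s%:R by rewrite -SE.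
  have h := E2 i hmi' s s64' sT.
  rewrite -LE in h.
  set q := Num.sqrt _ in h.
  have q0 : 0 <= q by apply: sqrtr_ge0.
  have mu0 : 0 <= mu i by case/andP: (hmu i).
  have hq : (s%:R * q) ^+ 2 = s%:R * mu i * L.
    rewrite exprMn sqr_sqrtr; last by apply: divr_ge0 => //; apply: mulr_ge0 => //; lra.
    by field; lra.
  have smu : s%:R * mu i <= 192 * 9 * L.
    have : s%:R * mu i <= (192 * S) * M by apply: ler_pM => //; lra.
    nra.
  have sq : s%:R * q < 42 * L.
    have sq0 : 0 <= s%:R * q by apply: mulr_ge0; lra.
    have hx2 : (s%:R * q) ^+ 2 <= 1728 * L ^+ 2.
      by rewrite hq; nra.
    move: hx2 sq0; set x := s%:R * q; clearbody x => hx2 sq0.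
    rewrite expr2 in hx2; nra.
  have : muhat Y i s <= mu i + 3 * q.
    move: h; rewrite /cst => /ler_normlP [h1 h2]; lra.
  move=> hm; have : s%:R * muhat Y i s <= s%:R * (mu i + 3 * q).
    by apply: ler_wpM2l; lra.
  nra.
have hmi' : mu i <= mustar mu / 64 by rewrite -ME.
have s64' : 64 * Sval mu T <= s%:R by rewrite -SE.
have h := E3 i hmi' s s64' sT.
  rewrite -ME in h.
have : s%:R * muhat Y i s <= s%:R * (M / 32).
  by apply: ler_wpM2l; lra.
nra.
Qed.
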